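(* Let $g$ be a left-invariant Riemannian metric on $SU(2)$. Then there are left-invariant vector fields $X_1,X_2,X_3$ on $SU(2)$ with $[X_1,X_2]=X_3$, $[X_2,X_3]=X_1$, $[X_3,X_1]=X_2$ (a Milnor frame) and positive numbers $f_1,f_2,f_3$ such that $g=f_1^2\,\omega_1\otimes\omega_1+f_2^2\,\omega_2\otimes\omega_2+f_3^2\,\omega_3\otimes\omega_3$, where $\omega_i$ is the one-form dual to $X_i$. Moreover, $g$ passes to an $SU(2)$-invariant Riemannian metric on $SU(2)/\mathbb{Z}_n$ if and only if one of the following holds: (i) $n\in\{1,2\}$; (ii) $n=4$, and after possibly altering the choice of diagonalising Milnor frame, $X_1$ is a scalar multiple of $u_1$ and $\mathrm{span}\{X_2,X_3\}=\mathrm{span}\{u_2,u_3\}$; (iii) $n\in\mathbb{N}\setminus\{1,2,4\}$, and the diagonalising Milnor frame can be chosen with $X_i=\frac{u_i}{2}$, and in this basis $f_2=f_3$.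
   Context: $SU(2)=\{\begin{pmatrix}a&-\bar b\\ b&\bar a\end{pmatrix}: |a|^2+|b|^2=1\}$ with Lie algebra spanned by $u_1=\begin{pmatrix}i&0\\0&-i\end{pmatrix}$, $u_2=\begin{pmatrix}0&i\\ i&0\end{pmatrix}$, $u_3=\begin{pmatrix}0&-1\\1&0\end{pmatrix}$, satisfying $[u_1,u_2]=2u_3$, $[u_2,u_3]=2u_1$, $[u_3,u_1]=2u_2$. $\mathbb{Z}_n=\{\mathrm{diag}(e^{2\pi ik/n},e^{-2\pi ik/n}):k=0,\dots,n-1\}$ acts on $SU(2)$ by right multiplication, and $SU(2)/\mathbb{Z}_n$ carries the left $SU(2)$-action; a left-invariant metric ''passes to'' the quotient if it induces a Riemannian metric on $SU(2)/\mathbb{Z}_n$, which is then $SU(2)$-invariant. *)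

(* Defs.v *)
From mathcomp Require Import all_boot all_order all_algebra.
From mathcomp Require Import complex.
From mathcomp Require Import all_classical all_reals trigo.
Import GRing.Theory Num.Theory ComplexField.

Set Implicit Arguments.
Unset Strict Implicit.
Unset Printing Implicit Defensive.

Local Open Scope ring_scope.
Local Open Scope complex_scope.

Section SU2.
Variable R : realType.

Definition i1 : 'I_3 := inord 0.
Definition i2 : 'I_3 := inord 1.
Definition i3 : 'I_3 := inord 2.

Definition u1 : 'M[R[i]]_2 :=
  \matrix_(a < 2, b < 2)
    if (a == 0 :> nat) && (b == 0 :> nat) then 0 +i* 1
    else if (a == 1 :> nat) && (b == 1 :> nat) then 0 +i* (-1) else 0.
Definition u2 : 'M[R[i]]_2 :=
  \matrix_(a < 2, b < 2) if a != b then 0 +i* 1 else 0.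
Definition u3 : 'M[R[i]]_2 :=
  \matrix_(a < 2, b < 2)
    if (a == 0 :> nat) && (b == 1 :> nat) then (-1)%:C
    else if (a == 1 :> nat) && (b == 0 :> nat) then 1%:C else 0.

Definition u (j : 'I_3) : 'M[R[i]]_2 :=
  if j == i1 then u1 else if j == i2 then u2 else u3.

(* A left-invariant vector field on SU(2) is identified with its value at the
   identity, an element of su(2) = span_R{u1,u2,u3}; we represent it by its
   real coordinate row vector x in the basis (u1,u2,u3). *)
Definition su2 (x : 'rV[R]_3) : 'M[R[i]]_2 := \sum_(j < 3) (x 0 j)%:C *: u j.

Definition ucoord (j : 'I_3) : 'rV[R]_3 := delta_mx 0 j.

(* Lie bracket of left-invariant vector fields = matrix commutator in su(2):
   [x, y] = z *)
Definition is_bracket (x y z : 'rV[R]_3) : Prop :=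
  su2 x *m su2 y - su2 y *m su2 x = su2 z.

(* A left-invariant Riemannian metric on SU(2) = an inner product on su(2),
   given by its Gram matrix G in the basis (u1,u2,u3). *)
Definition metric_val (G : 'M[R]_3) (x y : 'rV[R]_3) : R := (x *m G *m y^T) 0 0.

Definition left_inv_metric (G : 'M[R]_3) : Prop :=
  G^T = G /\ forall x : 'rV[R]_3, x != 0 -> 0 < metric_val G x x.

Definition frame_mx (X : 'I_3 -> 'rV[R]_3) : 'M[R]_3 := \matrix_(k < 3) X k.

Definition milnor_frame (X : 'I_3 -> 'rV[R]_3) : Prop :=
  frame_mx X \in unitmx /\
  is_bracket (X i1) (X i2) (X i3) /\
  is_bracket (X i2) (X i3) (X i1) /\
  is_bracket (X i3) (X i1) (X i2).

Definition dual_form (X : 'I_3 -> 'rV[R]_3) (k : 'I_3) (y : 'rV[R]_3) : R :=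
  (y *m invmx (frame_mx X)) 0 k.

Definition diagonalises (G : 'M[R]_3) (X : 'I_3 -> 'rV[R]_3) (f : 'I_3 -> R)
  : Prop :=
  (forall k, 0 < f k) /\
  forall x y : 'rV[R]_3,
    metric_val G x y =
    \sum_(k < 3) f k ^+ 2 * dual_form X k x * dual_form X k y.

Definition diag_milnor_frame (G : 'M[R]_3) (X : 'I_3 -> 'rV[R]_3)
  (f : 'I_3 -> R) : Prop :=
  milnor_frame X /\ diagonalises G X f.

Definition zn_elt (n k : nat) : 'M[R[i]]_2 :=
  let t : R := 2 * pi * k%:R / n%:R in
  let e : R[i] := cos t +i* sin t in
  diag_mx (\row_(a < 2) if a == 0 :> nat then e else e^-1).

(* g passes to SU(2)/Z_n (Z_n acting by right multiplication): g is invariant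
   under right translation R_h for all h in Z_n.  For a left-invariant metric,
   (R_h^* g)(X, Y) = g(Ad_{h^-1} X, Ad_{h^-1} Y) on left-invariant X, Y, where
   Ad_{h^-1} X = h^-1 X h. *)
Definition passes_to_quotient (G : 'M[R]_3) (n : nat) : Prop :=
  forall k : nat, (k < n)%N ->
  forall x y x' y' : 'rV[R]_3,
    su2 x' = invmx (zn_elt n k) *m su2 x *m zn_elt n k ->
    su2 y' = invmx (zn_elt n k) *m su2 y *m zn_elt n k ->
    metric_val G x' y' = metric_val G x y.

End SU2.

Arguments ucoord {R} j.
Arguments u1 {R}.
Arguments u2 {R}.
Arguments u3 {R}.
Arguments u {R} j.
Arguments zn_elt {R} n k.

(* Main.v *)
Require Import Defs.
From mathcomp Require Import all_boot all_order all_algebra.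
From mathcomp Require Import complex polyrcf.
From mathcomp Require Import all_classical all_reals trigo.
From mathcomp Require Import ring lra.
From mathcomp Require Import nsatz_realtype.
From Stdlib Require Nsatz.
Import Order.TTheory GRing.Theory Num.Theory ComplexField.
Local Open Scope ring_scope.
Local Open Scope complex_scope.
Set Implicit Arguments.
Unset Strict Implicit.
Unset Printing Implicit Defensive.

Section Work.
Variable R : realType.
Implicit Types x y z : 'rV[R]_3.

Definition o0 : 'I_3 := ord0.
Definition o1 : 'I_3 := lift ord0 ord0.
Definition o2 : 'I_3 := lift ord0 (lift ord0 ord0).
Lemma i1E : i1 = o0. Proof. by apply/val_inj; rewrite /= inordK. Qed.
Lemma i2E : i2 = o1. Proof. by apply/val_inj; rewrite /= inordK. Qed.
Lemma i3E : i3 = o2. Proof. by apply/val_inj; rewrite /= inordK. Qed.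
Lemma sum3 (F : 'I_3 -> R) : \sum_(j < 3) F j = F o0 + F o1 + F o2.
Proof. by rewrite !big_ord_recl big_ord0 addr0 addrA. Qed.
Lemma ord3P (j : 'I_3) : [\/ j = o0, j = o1 | j = o2].
Proof.
case: j => [[|[|[|//]]] Hj]; [constructor 1|constructor 2|constructor 3]; exact: val_inj.
Qed.
Lemma ord2P (j : 'I_2) : j = 0 \/ j = 1.
Proof. case: j => [[|[|//]] Hj]; [left|right]; exact: val_inj. Qed.

Definition mkv (a b c : R) : 'rV[R]_3 :=
  \row_j (if j == o0 then a else if j == o1 then b else c).
Lemma mkvE0 a b c : mkv a b c 0 o0 = a. Proof. by rewrite mxE. Qed.
Lemma mkvE1 a b c : mkv a b c 0 o1 = b. Proof. by rewrite mxE. Qed.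
Lemma mkvE2 a b c : mkv a b c 0 o2 = c. Proof. by rewrite mxE. Qed.
Lemma vecE x : x = mkv (x 0 o0) (x 0 o1) (x 0 o2).
Proof.
apply/rowP => j; rewrite mxE; case: (ord3P j) => ->; by [].
Qed.
Lemma mkv_eq a b c a' b' c' : a = a' -> b = b' -> c = c' -> mkv a b c = mkv a' b' c'.
Proof. by move=> -> -> ->. Qed.

Definition v0 x := x 0 o0.
Definition v1 x := x 0 o1.
Definition v2 x := x 0 o2.

Lemma metric_valE G x y : metric_val G x y =
  v0 x * (G o0 o0 * v0 y + G o0 o1 * v1 y + G o0 o2 * v2 y) +
  v1 x * (G o1 o0 * v0 y + G o1 o1 * v1 y + G o1 o2 * v2 y) +
  v2 x * (G o2 o0 * v0 y + G o2 o1 * v1 y + G o2 o2 * v2 y).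
Proof.
rewrite /metric_val mxE sum3 !mxE !sum3 /v0 /v1 /v2. ring.
Qed.


Definition su2m (a b c : R) : 'M[R[i]]_2 :=
  \matrix_(p < 2, q < 2)
    if p == 0 then (if q == 0 then 0 +i* a else (- c) +i* b)
    else (if q == 0 then c +i* b else 0 +i* (- a)).

Lemma uE : u (R:=R) o0 = u1 /\ u (R:=R) o1 = u2 /\ u (R:=R) o2 = u3.
Proof. by rewrite /u i1E i2E. Qed.

Lemma su2E x : su2 x = su2m (v0 x) (v1 x) (v2 x).
Proof.
have [h0 [h1 h2]] := uE.
apply/matrixP => p q; rewrite /su2 summxE.
rewrite !big_ord_recl big_ord0 addr0 -/o0 -/o1 -/o2.
rewrite !mxE h0 h1 h2 /u1 /u2 /u3 !mxE /v0 /v1 /v2.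
by case: (ord2P p) => ->; case: (ord2P q) => -> /=; simpc.
Qed.

Lemma su2m_inj a b c a' b' c' : su2m a b c = su2m a' b' c' -> [/\ a = a', b = b' & c = c'].
Proof.
move/matrixP => H.
have := H 0 0; have := H 1 0; rewrite !mxE /= => -[-> ->] [->]. by [].
Qed.

Lemma su2_inj x y : su2 x = su2 y -> x = y.
Proof.
rewrite !su2E => /su2m_inj [h0 h1 h2].
by rewrite (vecE x) (vecE y) -/(v0 x) -/(v1 x) -/(v2 x) h0 h1 h2.
Qed.

Lemma su2m_comm a b c a' b' c' :
  su2m a b c *m su2m a' b' c' - su2m a' b' c' *m su2m a b c =
  su2m (2 * (b * c' - c * b')) (2 * (c * a' - a * c')) (2 * (a * b' - b * a')).
Proof.
apply/matrixP => p q; rewrite !mxE !big_ord_recl !big_ord0 !mxE /=.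
by case: (ord2P p) => ->; case: (ord2P q) => -> /=; simpc;
  apply/eqP; rewrite eq_complex /=; apply/andP; split; apply/eqP; ring.
Qed.


Definition crs x y := mkv (v1 x * v2 y - v2 x * v1 y) (v2 x * v0 y - v0 x * v2 y)
  (v0 x * v1 y - v1 x * v0 y).

Lemma v0mkv a b c : v0 (mkv a b c) = a. Proof. by rewrite /v0 mxE. Qed.
Lemma v1mkv a b c : v1 (mkv a b c) = b. Proof. by rewrite /v1 mxE. Qed.
Lemma v2mkv a b c : v2 (mkv a b c) = c. Proof. by rewrite /v2 mxE. Qed.
Lemma v0Z (r : R) x : v0 (r *: x) = r * v0 x. Proof. by rewrite /v0 mxE. Qed.
Lemma v1Z (r : R) x : v1 (r *: x) = r * v1 x. Proof. by rewrite /v1 mxE. Qed.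
Lemma v2Z (r : R) x : v2 (r *: x) = r * v2 x. Proof. by rewrite /v2 mxE. Qed.
Lemma v0D x y : v0 (x + y) = v0 x + v0 y. Proof. by rewrite /v0 mxE. Qed.
Lemma v1D x y : v1 (x + y) = v1 x + v1 y. Proof. by rewrite /v1 mxE. Qed.
Lemma v2D x y : v2 (x + y) = v2 x + v2 y. Proof. by rewrite /v2 mxE. Qed.
Lemma v0N x : v0 (- x) = - v0 x. Proof. by rewrite /v0 mxE. Qed.
Lemma v1N x : v1 (- x) = - v1 x. Proof. by rewrite /v1 mxE. Qed.
Lemma v2N x : v2 (- x) = - v2 x. Proof. by rewrite /v2 mxE. Qed.
Definition vE := (v0mkv, v1mkv, v2mkv, v0Z, v1Z, v2Z, v0D, v1D, v2D, v0N, v1N, v2N).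

Lemma vP x y : v0 x = v0 y -> v1 x = v1 y -> v2 x = v2 y -> x = y.
Proof. by move=> h0 h1 h2; rewrite (vecE x) (vecE y) -/(v0 x) -/(v1 x) -/(v2 x) h0 h1 h2. Qed.

Lemma bracketP x y z : is_bracket x y z <-> z = 2 *: crs x y.
Proof.
rewrite /is_bracket (su2E x) (su2E y) su2m_comm.
have -> : su2m (2 * (v1 x * v2 y - v2 x * v1 y)) (2 * (v2 x * v0 y - v0 x * v2 y))
    (2 * (v0 x * v1 y - v1 x * v0 y)) = su2 (2 *: crs x y) by rewrite su2E !vE.
by split => [/esym/su2_inj | ->].
Qed.

Lemma invmx_eq (F : comUnitRingType) n (A B : 'M[F]_n) : A *m B = 1%:M -> invmx A = B.
Proof.
move=> H; have [uA _] := mulmx1_unit H.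
by rewrite -[invmx A]mulmx1 -H mulmxA mulVmx ?mul1mx.
Qed.

Lemma einv (a b : R) : a * a + b * b = 1 -> (a +i* b)^-1 = a +i* (- b).
Proof.
move=> h; rewrite /GRing.inv /= expr2 expr2 h; simpc; by rewrite !divr1.
Qed.

Definition dg (e : R[i]) : 'M[R[i]]_2 :=
  diag_mx (\row_(p < 2) if p == 0 :> nat then e else e^-1).

Lemma Ad_su2m (a b x0 x1 x2 : R) : a * a + b * b = 1 ->
  invmx (dg (a +i* b)) *m su2m x0 x1 x2 *m dg (a +i* b) =
  su2m x0 ((a * a - b * b) * x1 + (b * a + a * b) * x2)
          ((a * a - b * b) * x2 - (b * a + a * b) * x1).
Proof.
move=> h.
have en0 : (a +i* b) != 0.
  apply/negP; rewrite eq_complex /= => /andP [/eqP ha /eqP hb].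
  by move: h; rewrite ha hb mulr0 addr0 => /eqP; rewrite eq_sym oner_eq0.
have -> : invmx (dg (a +i* b)) = diag_mx (\row_(p < 2) if p == 0 :> nat then (a +i* b)^-1 else (a +i* b)).
  apply: invmx_eq; apply/matrixP => p q; rewrite mul_diag_mx !mxE.
  case: (ord2P p) => ->; case: (ord2P q) => -> /=; rewrite ?mulr0 ?mulr1n ?mulr0n //.
    by rewrite mulfV.
  by rewrite mulVf.
rewrite /dg mul_diag_mx mul_mx_diag; apply/matrixP => p q; rewrite !mxE (@einv a b h).
by case: (ord2P p) => ->; case: (ord2P q) => -> /=; simpc;
  apply/eqP; rewrite eq_complex /=; apply/andP; split; apply/eqP; nsatz.
Qed.

End Work.


Section W2.
Variable R : realType.
Implicit Types x y z : 'rV[R]_3.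

Definition tt (n k : nat) : R := 2 * pi * k%:R / n%:R.
Definition rotv (C S : R) x := mkv (v0 x) (C * v1 x + S * v2 x) (C * v2 x - S * v1 x).
Definition Ck n k := cos (tt n k + tt n k).
Definition Sk n k := sin (tt n k + tt n k).

Lemma Ad_zn n k x : invmx (zn_elt n k) *m su2 x *m zn_elt n k =
  su2 (rotv (Ck n k) (Sk n k) x).
Proof.
have -> : zn_elt n k = dg (cos (tt n k) +i* sin (tt n k)) by [].
rewrite su2E Ad_su2m; last by rewrite -!expr2 cos2Dsin2.
by rewrite su2E !vE /Ck /Sk cosD sinD.
Qed.

Lemma passesP G n : passes_to_quotient G n <->
  forall k, (k < n)%N -> forall x y,
    metric_val G (rotv (Ck n k) (Sk n k) x) (rotv (Ck n k) (Sk n k) y) = metric_val G x y.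
Proof.
split => H k kn x y.
  by apply: (H k kn x y); rewrite Ad_zn.
move=> x' y'; rewrite !Ad_zn => /su2_inj -> /su2_inj ->; exact: H.
Qed.

End W2.


Section W3.
Variable R : realType.
Implicit Types (x y z a b : 'rV[R]_3) (G : 'M[R]_3).

Definition dot x y := v0 x * v0 y + v1 x * v1 y + v2 x * v2 y.
Definition sel (p1 p2 p3 : 'rV[R]_3) (j : 'I_3) : 'rV[R]_3 :=
  if j == o0 then p1 else if j == o1 then p2 else p3.
Definition Pm (p1 p2 p3 : 'rV[R]_3) : 'M[R]_3 := \matrix_(k, j) sel p1 p2 p3 k 0 j.

Definition rotframe p1 p2 p3 :=
  [/\ dot p1 p1 = 1, dot p2 p2 = 1, dot p3 p3 = 1, dot p1 p2 = 0 &
   [/\ dot p1 p3 = 0, dot p2 p3 = 0, crs p1 p2 = p3, crs p2 p3 = p1 & crs p3 p1 = p2]].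

Lemma dotC x y : dot x y = dot y x.
Proof. by rewrite /dot; ring. Qed.

Lemma dot1_neq0 x : dot x x = 1 -> x != 0.
Proof.
move=> h; apply/eqP => x0; move: h; rewrite x0 /dot /v0 /v1 /v2 !mxE !mulr0 !addr0 => /eqP.
by rewrite eq_sym oner_eq0.
Qed.

Lemma PPt p1 p2 p3 : rotframe p1 p2 p3 -> Pm p1 p2 p3 *m (Pm p1 p2 p3)^T = 1%:M.
Proof.
case=> h11 h22 h33 h12 [h13 h23 _ _ _].
apply/matrixP => p q; rewrite !mxE sum3 !mxE.
change (dot (sel p1 p2 p3 p) (sel p1 p2 p3 q) = (p == q)%:R).
case: (ord3P p) => ->; case: (ord3P q) => -> /=; rewrite /sel /= ?mulr1n ?mulr0n //;
  by rewrite dotC.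
Qed.

Lemma metric_sym G a b : G^T = G -> metric_val G a b = metric_val G b a.
Proof.
move=> GT; rewrite /metric_val -[in LHS](trmxK (a *m G *m b^T)) mxE !trmx_mul trmxK GT.
by rewrite mulmxA.
Qed.

Lemma PGPt G p1 p2 p3 p q :
  (Pm p1 p2 p3 *m G *m (Pm p1 p2 p3)^T) p q =
  metric_val G (sel p1 p2 p3 p) (sel p1 p2 p3 q).
Proof. by rewrite /metric_val !mxE !sum3 !mxE !sum3 !mxE. Qed.

Lemma vxPt x p1 p2 p3 :
  [/\ v0 (x *m (Pm p1 p2 p3)^T) = dot x p1, v1 (x *m (Pm p1 p2 p3)^T) = dot x p2 &
      v2 (x *m (Pm p1 p2 p3)^T) = dot x p3].
Proof. by rewrite /v0 /v1 /v2 !mxE !sum3 !mxE. Qed.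

Lemma frame_ok G p1 p2 p3 (X : 'I_3 -> 'rV[R]_3) :
  left_inv_metric G -> rotframe p1 p2 p3 ->
  metric_val G p1 p2 = 0 -> metric_val G p1 p3 = 0 -> metric_val G p2 p3 = 0 ->
  (forall j, X j = 2^-1 *: sel p1 p2 p3 j) ->
  diag_milnor_frame G X
    (fun k => Num.sqrt (metric_val G (sel p1 p2 p3 k) (sel p1 p2 p3 k)) / 2).
Proof.
move=> [GT Gpos] hr m12 m13 m23 HX.
have hr' := hr; case: hr' => h11 h22 h33 h12 [h13 h23 c12 c23 c31].
set P := Pm p1 p2 p3.
have PPt := PPt hr.
have PtP : P^T *m P = 1%:M by apply: mulmx1C.
have FE : frame_mx X = 2^-1 *: P.
  by apply/matrixP => p q; rewrite !mxE HX mxE.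
have FF : frame_mx X *m (2 *: P^T) = 1%:M.
  by rewrite FE -scalemxAl -scalemxAr PPt scalerA mulVf ?scale1r // pnatr_eq0.
have invF : invmx (frame_mx X) = 2 *: P^T by apply: invmx_eq.
have Fu : frame_mx X \in unitmx by case: (mulmx1_unit FF).
have dualE : forall k x, dual_form X k x = 2 * dot x (sel p1 p2 p3 k).
  by move=> k x; rewrite /dual_form invF -scalemxAr mxE mxE sum3 !mxE.
split.
  split => //; rewrite !HX i1E i2E i3E /sel /=.
  split; [|split]; apply/bracketP; apply: vP.
  - by rewrite -{1}c12 /crs !vE; field.
  - by rewrite -{1}c12 /crs !vE; field.
  - by rewrite -{1}c12 /crs !vE; field.
  - by rewrite -{1}c23 /crs !vE; field.
  - by rewrite -{1}c23 /crs !vE; field.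
  - by rewrite -{1}c23 /crs !vE; field.
  - by rewrite -{1}c31 /crs !vE; field.
  - by rewrite -{1}c31 /crs !vE; field.
  - by rewrite -{1}c31 /crs !vE; field.
have mpos : forall k, 0 < metric_val G (sel p1 p2 p3 k) (sel p1 p2 p3 k).
  move=> k; apply: Gpos; apply: dot1_neq0.
  by case: (ord3P k) => -> ; rewrite /sel /=.
split.
  by move=> k; apply: divr_gt0 => //; rewrite sqrtr_gt0.
move=> x y.
have -> : metric_val G x y = metric_val (P *m G *m P^T) (x *m P^T) (y *m P^T).
  rewrite /metric_val trmx_mul trmxK !mulmxA -(mulmxA x P^T P) PtP mulmx1.
  by rewrite -(mulmxA (x *m G) P^T P) PtP mulmx1.
rewrite metric_valE !PGPt.
have [a0 a1 a2] := vxPt x p1 p2 p3.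
have [b0 b1 b2] := vxPt y p1 p2 p3.
rewrite a0 a1 a2 b0 b1 b2 sum3 !dualE /sel /=.
rewrite (metric_sym p2 p1 GT) (metric_sym p3 p1 GT) (metric_sym p3 p2 GT) m12 m13 m23.
have q1 := mpos o0; have q2 := mpos o1; have q3 := mpos o2.
rewrite /sel /= in q1 q2 q3.
rewrite !exprMn (sqr_sqrtr (ltW q1)) (sqr_sqrtr (ltW q2)) (sqr_sqrtr (ltW q3)).
by field.
Qed.

End W3.


Section W4.
Variable R : realType.
Implicit Types (x y z a b : 'rV[R]_3) (G : 'M[R]_3).

Lemma crsDr x y z : crs x (y + z) = crs x y + crs x z.
Proof. by apply: vP; rewrite /crs !vE; ring. Qed.
Lemma crsZr (r : R) x y : crs x (r *: y) = r *: crs x y.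
Proof. by apply: vP; rewrite /crs !vE; ring. Qed.
Lemma crsDl x y z : crs (y + z) x = crs y x + crs z x.
Proof. by apply: vP; rewrite /crs !vE; ring. Qed.
Lemma crsZl (r : R) x y : crs (r *: y) x = r *: crs y x.
Proof. by apply: vP; rewrite /crs !vE; ring. Qed.
Lemma crsC x y : crs x y = - crs y x.
Proof. by apply: vP; rewrite /crs !vE; ring. Qed.
Lemma crs_self x : crs x x = 0.
Proof. by apply: vP; rewrite /crs !vE /v0 /v1 /v2 !mxE; ring. Qed.
Lemma crs_bac x y z : crs x (crs y z) = dot x z *: y - dot x y *: z.
Proof. by apply: vP; rewrite /crs /dot !vE; ring. Qed.
Lemma dot_crs_l x y : dot x (crs x y) = 0.
Proof. by rewrite /crs /dot !vE; ring. Qed.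
Lemma dot_crs_r x y : dot y (crs x y) = 0.
Proof. by rewrite /crs /dot !vE; ring. Qed.
Lemma dot_crs_crs x y : dot (crs x y) (crs x y) = dot x x * dot y y - dot x y * dot x y.
Proof. by rewrite /crs /dot !vE; ring. Qed.
Lemma dotDr x y z : dot x (y + z) = dot x y + dot x z.
Proof. by rewrite /dot !vE; ring. Qed.
Lemma dotZr (r : R) x y : dot x (r *: y) = r * dot x y.
Proof. by rewrite /dot !vE; ring. Qed.
Lemma dotDl x y z : dot (y + z) x = dot y x + dot z x.
Proof. by rewrite /dot !vE; ring. Qed.
Lemma dotZl (r : R) x y : dot (r *: y) x = r * dot y x.
Proof. by rewrite /dot !vE; ring. Qed.
Lemma mvDr G x y z : metric_val G x (y + z) = metric_val G x y + metric_val G x z.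
Proof. by rewrite !metric_valE !vE; ring. Qed.
Lemma mvZr G (r : R) x y : metric_val G x (r *: y) = r * metric_val G x y.
Proof. by rewrite !metric_valE !vE; ring. Qed.
Lemma mvDl G x y z : metric_val G (y + z) x = metric_val G y x + metric_val G z x.
Proof. by rewrite !metric_valE !vE; ring. Qed.
Lemma mvZl G (r : R) x y : metric_val G (r *: y) x = r * metric_val G y x.
Proof. by rewrite !metric_valE !vE; ring. Qed.

Lemma rot_step p1 p2 p3 (c s : R) : c * c + s * s = 1 -> rotframe p1 p2 p3 ->
  rotframe p1 (c *: p2 + s *: p3) ((- s) *: p2 + c *: p3).
Proof.
move=> hcs [h11 h22 h33 h12 [h13 h23 c12 c23 c31]].
have h21 : dot p2 p1 = 0 by rewrite dotC.
have h31 : dot p3 p1 = 0 by rewrite dotC.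
have h32 : dot p3 p2 = 0 by rewrite dotC.
have D : forall u v w : 'rV[R]_3, True by [].
split; [exact: h11 | | | | split].
- rewrite !(dotDr, dotZr, dotDl, dotZl, h22, h33, h23, h32). clear -hcs. nsatz.
- rewrite !(dotDr, dotZr, dotDl, dotZl, h22, h33, h23, h32); clear -hcs; nsatz.
- rewrite !(dotDr, dotZr, dotDl, dotZl, h12, h13); clear -hcs; nsatz.
- rewrite !(dotDr, dotZr, dotDl, dotZl, h12, h13); clear -hcs; nsatz.
- rewrite !(dotDr, dotZr, dotDl, dotZl, h22, h33, h23, h32); clear -hcs; nsatz.
- by rewrite crsDr !crsZr c12 (crsC p1 p3) c31; apply: vP; rewrite !vE; ring.
- rewrite crsDr !crsZr !crsDl !crsZl !crs_self (crsC p3 p2) c23.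
  apply: vP; rewrite !vE /v0 /v1 /v2 !mxE; clear -hcs; nsatz.
- by rewrite crsDl !crsZl c31 (crsC p2 p1) c12; apply: vP; rewrite !vE; ring.
Qed.


Lemma half_angle (phi : R) :
  let c := cos (phi / 2) in let s := sin (phi / 2) in
  [/\ c * c + s * s = 1, c * c - s * s = cos phi & c * s = sin phi / 2].
Proof.
move=> c s.
have e : phi = phi / 2 + phi / 2 by rewrite -splitr.
split.
- by rewrite -!expr2 cos2Dsin2.
- by rewrite [in RHS]e cosD.
- by rewrite [in RHS]e sinD -/c -/s; field.
Qed.

Lemma angle2D (al be ga : R) : exists c s : R,
  c * c + s * s = 1 /\ (c * c - s * s) * be + c * s * (ga - al) = 0.
Proof.
have key : forall phi : R, cos phi * be + sin phi / 2 * (ga - al) = 0 ->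
    exists c s : R, c * c + s * s = 1 /\ (c * c - s * s) * be + c * s * (ga - al) = 0.
  move=> phi h; have [h1 h2 h3] := half_angle phi.
  by exists (cos (phi / 2)), (sin (phi / 2)); rewrite h2 h3.
have [e|ne] := eqVneq ga al.
  by apply: (key (pi / 2)); rewrite cos_pihalf e subrr !mulr0 mul0r addr0.
apply: (key (atan (2 * be / (al - ga)))).
set phi := atan _.
have [hr ht] := atan_def (2 * be / (al - ga)).
have cpos : 0 < cos phi by apply: cos_gt0_pihalf.
have hs : sin phi = cos phi * (2 * be / (al - ga)).
  by rewrite -ht /tan mulrC divfK // lt0r_neq0.
rewrite hs; field.
by rewrite subr_eq0 eq_sym.
Qed.

Lemma step_diag G p1 p2 p3 : left_inv_metric G -> rotframe p1 p2 p3 ->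
  metric_val G p1 p2 = 0 -> metric_val G p1 p3 = 0 ->
  exists c s : R, c * c + s * s = 1 /\
    let q2 := c *: p2 + s *: p3 in let q3 := (- s) *: p2 + c *: p3 in
    [/\ rotframe p1 q2 q3, metric_val G p1 q2 = 0, metric_val G p1 q3 = 0 &
        metric_val G q2 q3 = 0].
Proof.
move=> [GT _] hr m12 m13.
have [c [s [hcs hd]]] := angle2D (metric_val G p2 p2) (metric_val G p2 p3) (metric_val G p3 p3).
exists c, s; split => // q2 q3.
split.
- exact: rot_step.
- by rewrite /q2 mvDr !mvZr m12 m13 !mulr0 addr0.
- by rewrite /q3 mvDr !mvZr m12 m13 !mulr0 addr0.
- rewrite /q2 /q3 !(mvDr, mvDl, mvZr, mvZl) (metric_sym p3 p2 GT).
  by rewrite -hd; ring.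
Qed.

End W4.


Section W5.
Variable R : realType.
Implicit Types (x y z a b v w : 'rV[R]_3) (G : 'M[R]_3).

Lemma eig G : exists (l : R) v, v != 0 /\ v *m G = l *: v.
Proof.
have [l hl] : {l : R | root (char_poly G) l}.
  by apply: odd_poly_root; rewrite size_char_poly.
have : eigenvalue G l by rewrite eigenvalue_root_char.
by case/eigenvalueP => v hv vn0; exists l, v.
Qed.

Lemma dot_ge0 x : 0 <= dot x x.
Proof. rewrite /dot; nra. Qed.

Lemma dot_eq0 x : dot x x = 0 -> x = 0.
Proof.
rewrite /dot => h.
have h0 : v0 x = 0 by nra.
have h1 : v1 x = 0 by nra.
have h2 : v2 x = 0 by nra.
by apply: vP; rewrite ?h0 ?h1 ?h2 /v0 /v1 /v2 !mxE.
Qed.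

Lemma eig_unit G : exists (l : R) v, dot v v = 1 /\ v *m G = l *: v.
Proof.
have [l [v [vn0 hv]]] := eig G.
have dpos : 0 < dot v v.
  rewrite lt_neqAle dot_ge0 andbT eq_sym; apply/negP => /eqP /dot_eq0 v0'.
  by move: vn0; rewrite v0' eqxx.
set r := Num.sqrt (dot v v).
have rpos : 0 < r by rewrite sqrtr_gt0.
exists l, (r^-1 *: v); split.
  rewrite dotZl dotZr mulrA -expr2 exprVn sqr_sqrtr ?(ltW dpos) // mulVf //.
  exact: lt0r_neq0.
by rewrite -scalemxAl hv scalerA mulrC -scalerA.
Qed.

Lemma dot_mx x y : (x *m y^T) 0 0 = dot x y.
Proof. by rewrite mxE sum3 !mxE. Qed.

Lemma metric_eig G (l : R) v w : v *m G = l *: v -> metric_val G v w = l * dot v w.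
Proof. by move=> hv; rewrite /metric_val hv -scalemxAl mxE dot_mx. Qed.

Lemma compl v : dot v v = 1 -> exists w, dot w w = 1 /\ dot v w = 0.
Proof.
move=> hv.
set q := v0 v * v0 v + v1 v * v1 v.
have [q0|qn0] := eqVneq q 0.
  have h0 : v0 v = 0 by rewrite /q in q0; nra.
  have h1 : v1 v = 0 by rewrite /q in q0; nra.
  exists (mkv 1 0 0); split; rewrite /dot !vE ?h0 ?h1; ring.
have qpos : 0 < q by rewrite lt_neqAle eq_sym qn0 /q; nra.
set r := Num.sqrt q.
have rpos : 0 < r by rewrite sqrtr_gt0.
have r2 : r * r = q by rewrite -expr2 sqr_sqrtr // ltW.
exists (r^-1 *: mkv (- v1 v) (v0 v) 0); split; rewrite /dot !vE.
  have -> : r^-1 * - v1 v * (r^-1 * - v1 v) + r^-1 * v0 v * (r^-1 * v0 v) + r^-1 * 0 * (r^-1 * 0)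
     = q / (r * r) by rewrite /q; field; exact: lt0r_neq0.
  by rewrite r2 divff.
by field; exact: lt0r_neq0.
Qed.

Lemma frame_of v w : dot v v = 1 -> dot w w = 1 -> dot v w = 0 -> rotframe v w (crs v w).
Proof.
move=> hv hw hvw.
split => //; first by rewrite dot_crs_crs hv hw hvw; ring.
split => //.
- exact: dot_crs_l.
- exact: dot_crs_r.
- by rewrite crs_bac hw dotC hvw scale0r subr0 scale1r.
- by rewrite crsC crs_bac hvw hv scale0r sub0r scale1r opprK.
Qed.

Lemma exists_frame G : left_inv_metric G ->
  exists (X : 'I_3 -> 'rV[R]_3) (f : 'I_3 -> R), diag_milnor_frame G X f.
Proof.
move=> hG.
have [l [v [hv hvG]]] := eig_unit G.
have [w [hw hvw]] := compl hv.
have hr := frame_of hv hw hvw.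
have m12 : metric_val G v w = 0 by rewrite (metric_eig _ hvG) hvw mulr0.
have m13 : metric_val G v (crs v w) = 0 by rewrite (metric_eig _ hvG) dot_crs_l mulr0.
have [c [s [hcs [hr' n12 n13 n23]]]] := step_diag hG hr m12 m13.
eexists; eexists; apply: (frame_ok hG hr' n12 n13 n23) => j; reflexivity.
Qed.

End W5.


Section W6.
Variable R : realType.
Implicit Types (x y z a b v w : 'rV[R]_3) (G : 'M[R]_3).

Definition e1 : 'rV[R]_3 := mkv 1 0 0.
Definition e2 : 'rV[R]_3 := mkv 0 1 0.
Definition e3 : 'rV[R]_3 := mkv 0 0 1.

Lemma ucoordE : [/\ ucoord i1 = e1, ucoord i2 = e2 & ucoord i3 = e3].
Proof.
by rewrite i1E i2E i3E; split; apply: vP; rewrite /v0 /v1 /v2 !mxE /=.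
Qed.

Lemma ucoord_sel j : ucoord j = sel e1 e2 e3 j.
Proof.
have [h1 h2 h3] := ucoordE; rewrite i1E i2E i3E in h1 h2 h3.
by case: (ord3P j) => ->; rewrite /sel /=.
Qed.

Lemma rot_e : rotframe e1 e2 e3.
Proof.
split; rewrite /dot ?vE; try ring; first split; rewrite /dot ?vE; try ring;
  apply: vP; rewrite /crs !vE; ring.
Qed.

Lemma mv_e G : [/\ metric_val G e1 e2 = G o0 o1, metric_val G e1 e3 = G o0 o2,
  metric_val G e2 e3 = G o1 o2, metric_val G e2 e2 = G o1 o1 & metric_val G e3 e3 = G o2 o2].
Proof. by split; rewrite metric_valE !vE; ring. Qed.

Lemma sin_natpi m : sin (m%:R * pi) = 0 :> R.
Proof.
elim: m => [|m IH]; first by rewrite mul0r sin0.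
by rewrite -natr1 mulrDl mul1r sinDpi IH oppr0.
Qed.

Lemma tt4 k : tt R 4 k + tt R 4 k = k%:R * pi :> R.
Proof. by rewrite /tt; field. Qed.

Lemma S4 k : Sk R 4 k = 0 :> R.
Proof. by rewrite /Sk tt4 sin_natpi. Qed.

Lemma C4 k : Ck R 4 k * Ck R 4 k = 1 :> R.
Proof. by have := cos2Dsin2 (tt R 4 k + tt R 4 k); rewrite -/(Ck R 4 k) -/(Sk R 4 k) S4 expr0n addr0 expr2. Qed.

Lemma CS n k : Ck R n k * Ck R n k + Sk R n k * Sk R n k = 1 :> R.
Proof. by rewrite -!expr2 cos2Dsin2. Qed.

Lemma CS12 n k : (n = 1 \/ n = 2)%N -> (k < n)%N -> Ck R n k = 1 /\ Sk R n k = 0.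
Proof.
have h0 : forall m, Ck R m 0 = 1 /\ Sk R m 0 = 0.
  by move=> m; rewrite /Ck /Sk /tt mulr0 mul0r addr0 cos0 sin0.
case=> ->; case: k => [|[|k]] //= _.
rewrite /Ck /Sk (_ : tt R 2 1 + tt R 2 1 = pi *+ 2) ?cos2pi ?sin2pi //.
by rewrite /tt mulr2n; field.
Qed.

Lemma Sk_neq0 n : (0 < n)%N -> n <> 1%N -> n <> 2%N -> n <> 4%N -> Sk R n 1 != 0 :> R.
Proof.
move=> n0 n1 n2 n4.
have e : tt R n 1 + tt R n 1 = 4 * pi / n%:R :> R.
  by rewrite /tt; field; rewrite pnatr_eq0 -lt0n.
rewrite /Sk e; clear e.
have [n3|n3] := eqVneq n 3.
  rewrite n3.
  have -> : 4 * pi / 3%:R = pi / 3 + pi :> R by field.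
  rewrite sinDpi oppr_eq0; apply: lt0r_neq0; apply: sin_gt0_pi.
  by rewrite divr_gt0 ?pi_gt0 //= ltr_pdivrMr // ltr_pMr ?pi_gt0 // ltr1n.
have n5 : (4 < n)%N.
  by case: n n0 n1 n2 n4 n3 => [|[|[|[|[|n]]]]].
apply: lt0r_neq0; apply: sin_gt0_pi.
have np : 0 < n%:R :> R by rewrite ltr0n.
rewrite divr_gt0 ?mulr_gt0 ?pi_gt0 //= ltr_pdivrMr //.
by rewrite mulrC ltr_pM2l ?pi_gt0 // ltr_nat.
Qed.

End W6.


Section W7.
Variable R : realType.
Implicit Types (x y z a b v w : 'rV[R]_3) (G : 'M[R]_3).

Lemma dual_X (X : 'I_3 -> 'rV[R]_3) j k : frame_mx X \in unitmx ->
  dual_form X k (X j) = (j == k)%:R.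
Proof.
move=> Fu; rewrite /dual_form.
have -> : X j = row j (frame_mx X) by rewrite rowK.
by rewrite -row_mul mulmxV // !mxE.
Qed.

Lemma frame_block G (X : 'I_3 -> 'rV[R]_3) f (c : R) : left_inv_metric G ->
  diag_milnor_frame G X f -> X i1 = c *: ucoord i1 ->
  (col_mx (X i2) (X i3) == col_mx (ucoord i2) (ucoord i3))%MS ->
  metric_val G (e1 R) (e2 R) = 0 /\ metric_val G (e1 R) (e3 R) = 0.
Proof.
move=> [GT _] [[Fu _] [_ Hd]] HX1 /andP [_ Hsub].
have [u1E u2E u3E] := ucoordE R.
rewrite u1E in HX1; rewrite u2E u3E in Hsub.
have dX := dual_X (X := X) _ _ Fu.
have m12 : metric_val G (X i1) (X i2) = 0.
  by rewrite Hd sum3 !dX i1E i2E /=; ring.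
have m13 : metric_val G (X i1) (X i3) = 0.
  by rewrite Hd sum3 !dX i1E i3E /=; ring.
have cn0 : c != 0.
  apply/eqP => c0; have := dX i1 i1; rewrite HX1 c0 scale0r /dual_form mul0mx mxE eqxx.
  by move/eqP; rewrite eq_sym oner_eq0.
have k2 : metric_val G (e1 R) (X i2) = 0.
  by apply/eqP; move: m12; rewrite HX1 mvZl => /eqP; rewrite mulf_eq0 (negbTE cn0).
have k3 : metric_val G (e1 R) (X i3) = 0.
  by apply/eqP; move: m13; rewrite HX1 mvZl => /eqP; rewrite mulf_eq0 (negbTE cn0).
have key : forall D : 'M[R]_(1, 1 + 1), metric_val G (e1 R) (D *m col_mx (X i2) (X i3)) = 0.
  move=> D; rewrite /metric_val trmx_mul mulmxA tr_col_mx mul_mx_row.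
  have z1 : (e1 R) *m G *m (X i2)^T = 0.
    by apply/matrixP => p q; rewrite !ord1 [RHS]mxE; exact: k2.
  have z2 : (e1 R) *m G *m (X i3)^T = 0.
    by apply/matrixP => p q; rewrite !ord1 [RHS]mxE; exact: k3.
  by rewrite z1 z2 row_mx0 mul0mx mxE.
move: Hsub; rewrite col_mx_sub => /andP [/submxP [D1 ->] /submxP [D2 ->]].
by rewrite !key.
Qed.

End W7.


Lemma dual_sel (R : realType) (p1 p2 p3 : 'rV[R]_3) (X : 'I_3 -> 'rV[R]_3) :
  rotframe p1 p2 p3 -> (forall j, X j = 2^-1 *: sel p1 p2 p3 j) ->
  forall k x, dual_form X k x = 2 * dot x (sel p1 p2 p3 k).
Proof.
move=> hr HX.
set P := Pm p1 p2 p3.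
have PPt := PPt hr.
have FE : frame_mx X = 2^-1 *: P.
  by apply/matrixP => p q; rewrite !mxE HX mxE.
have FF : frame_mx X *m (2 *: P^T) = 1%:M.
  by rewrite FE -scalemxAl -scalemxAr PPt scalerA mulVf ?scale1r // pnatr_eq0.
have invF : invmx (frame_mx X) = 2 *: P^T by apply: invmx_eq.
by move=> k x; rewrite /dual_form invF -scalemxAr mxE mxE sum3 !mxE.
Qed.

Local Close Scope complex_scope.

Theorem proposition2p1 (R : realType) (G : 'M[R]_3) :
  left_inv_metric G ->
  (exists (X : 'I_3 -> 'rV[R]_3) (f : 'I_3 -> R), diag_milnor_frame G X f) /\
  (forall n : nat, (0 < n)%N ->
    (passes_to_quotient G n <->
      [\/ n = 1%N \/ n = 2%N,
          n = 4%N /\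
          (exists (X : 'I_3 -> 'rV[R]_3) (f : 'I_3 -> R),
             diag_milnor_frame G X f /\
             (exists c : R, X i1 = c *: ucoord i1) /\
             (col_mx (X i2) (X i3) == col_mx (ucoord i2) (ucoord i3))%MS)
        | [/\ n <> 1%N, n <> 2%N, n <> 4%N &
             exists f : 'I_3 -> R,
               diag_milnor_frame G (fun j => 2^-1 *: ucoord j) f /\
               f i2 = f i3]])).
Proof.
move=> hG; split; first exact: exists_frame.
move=> n n0.
have GT := hG.1.
have s10 : G o1 o0 = G o0 o1 by rewrite -{1}GT mxE.
have s20 : G o2 o0 = G o0 o2 by rewrite -{1}GT mxE.
have s21 : G o2 o1 = G o1 o2 by rewrite -{1}GT mxE.
have [me12 me13 me23 me22 me33] := mv_e G.
have [u1E u2E u3E] := ucoordE R.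
apply: (iff_trans (passesP G n)).
split.
- move=> Hinv.
  have [n12|n12] := boolP ((n == 1) || (n == 2))%N.
    by constructor 1; case/orP: n12 => /eqP ->; [left|right].
  have n1 : n <> 1%N by move=> e; move: n12; rewrite e.
  have n2 : n <> 2%N by move=> e; move: n12; rewrite e.
  have k1 : (1 < n)%N by case: n n0 n1 n2 {Hinv n12} => [|[|n]].
  have E := Hinv 1%N k1.
  have E12 := E (e1 R) (e2 R); have E13 := E (e1 R) (e3 R).
  have E22 := E (e2 R) (e2 R); have E23 := E (e2 R) (e3 R).
  rewrite !metric_valE /rotv /e1 /e2 /e3 !vE in E12 E13 E22 E23.
  have [n4|n4] := eqVneq n 4%N.
    subst n; constructor 2; split => //.
    have hC : Ck R 4 1 = -1 by rewrite /Ck tt4 mul1r cospi.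
    have hS := S4 R 1.
    rewrite hC hS in E12 E13.
    have g12 : G o0 o1 = 0 by lra.
    have g13 : G o0 o2 = 0 by lra.
    have m12 : metric_val G (e1 R) (e2 R) = 0 by rewrite me12.
    have m13 : metric_val G (e1 R) (e3 R) = 0 by rewrite me13.
    have [c [s [hcs [hr n12' n13' n23']]]] := step_diag hG (rot_e R) m12 m13.
    eexists; eexists; split.
      by apply: (frame_ok hG hr n12' n13' n23') => j; reflexivity.
    split.
      by exists 2^-1; rewrite i1E /sel /= -i1E u1E.
    rewrite i2E i3E /sel /= -i2E -i3E u2E u3E.
    apply/andP; split; rewrite col_mx_sub; apply/andP; split; apply/submxP.
    + exists (row_mx (2^-1 * c)%:M (2^-1 * s)%:M).
      by rewrite mul_row_col !mul_scalar_mx; apply: vP; rewrite /e2 /e3 !vE; ring.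
    + exists (row_mx (2^-1 * - s)%:M (2^-1 * c)%:M).
      by rewrite mul_row_col !mul_scalar_mx; apply: vP; rewrite /e2 /e3 !vE; ring.
    + exists (row_mx (2 * c)%:M (2 * - s)%:M).
      rewrite mul_row_col !mul_scalar_mx; apply: vP; rewrite /e2 /e3 !vE; clear -hcs.
      * by field.
      * by rewrite -[in LHS]hcs; field.
      * by field.
    + exists (row_mx (2 * s)%:M (2 * c)%:M).
      rewrite mul_row_col !mul_scalar_mx; apply: vP; rewrite /e2 /e3 !vE; clear -hcs.
      * by field.
      * by field.
      * by rewrite -[in LHS]hcs; field.
  have n4' : n <> 4%N by apply/eqP.
  constructor 3; split => //.
  have Sn0 := Sk_neq0 R n0 n1 n2 n4'.
  have hcs := CS R n 1.
  move: E12 E13 E22 E23 Sn0 hcs.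
  set C := Ck R n 1; set S := Sk R n 1 => E12 E13 E22 E23 Sn0 hcs.
  have SS : (0 : R) < S * S by rewrite -expr2 exprn_even_gt0.
  have g12 : G o0 o1 = 0.
    have : G o0 o1 * ((C - 1) * (C - 1) + S * S) = 0.
      clear -E12 E13 hcs s10 s20 s21; nsatz.
    move/eqP; rewrite mulf_eq0 => /orP [/eqP //|].
    move/eqP => h; exfalso; have := sqr_ge0 (C - 1); rewrite expr2 => q; clear -SS h q; lra.
  have g13 : G o0 o2 = 0.
    have : S * G o0 o2 = 0.
      rewrite g12 in E12; clear -E12; nsatz.
    by move/eqP; rewrite mulf_eq0 (negbTE Sn0) => /eqP.
  have g23 : G o1 o2 = 0.
    have : S * G o1 o2 + S * G o1 o2 = 0.
      clear -E22 E23 hcs s10 s20 s21; nsatz.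
    by move/eqP; rewrite -mulr2n mulrn_eq0 /= mulf_eq0 (negbTE Sn0) => /eqP.
  have g2233 : G o2 o2 = G o1 o1.
    have : S * (G o2 o2 - G o1 o1) = 0.
      clear -E22 E23 hcs s10 s20 s21; nsatz.
    by move/eqP; rewrite mulf_eq0 (negbTE Sn0) subr_eq0 => /eqP.
  eexists; split.
    apply: (frame_ok hG (rot_e R)).
    - by rewrite me12.
    - by rewrite me13.
    - by rewrite me23.
    - by move=> j; rewrite ucoord_sel.
  by rewrite i2E i3E /sel /= me22 me33 g2233.
- case => [n12 | [n4 [X [f [hX [[c hc] hspan]]]]] | [n1 n2 n4 [f [hX f23]]]] k kn x y.
  + have [hC hS] := CS12 R n12 kn; rewrite hC hS; congr metric_val; apply: vP; rewrite /rotv !vE; ring.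
  + subst n; have [g12 g13] := frame_block hG hX hc hspan.
    rewrite me12 in g12; rewrite me13 in g13.
    have hC := C4 R k; have hS := S4 R k.
    move: hC hS; set C := Ck R 4 k; set S := Sk R 4 k => hC hS.
    rewrite !metric_valE /rotv !vE hS s10 s20 g12 g13 ?mul0r ?subr0 ?addr0 ?mul0r ?add0r; clearbody C; clear -hC; nsatz.
  + have hr := rot_e R.
    have hXs : forall j, (fun j => 2^-1 *: ucoord j) j = 2^-1 *: sel (e1 R) (e2 R) (e3 R) j.
      by move=> j; rewrite ucoord_sel.
    have dE := dual_sel hr hXs.
    have [_ [_ Hd]] := hX.
    rewrite !Hd !sum3 !dE /sel /= /dot /rotv /e1 /e2 /e3 !vE.
    move: f23; rewrite i2E i3E => f23; rewrite f23.
    have hcs := CS R n k.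
    move: hcs; set C := Ck R n k; set S := Sk R n k => hcs.
    clear -hcs; nsatz.
Qed.
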